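(* The normalizer of $\widehat{\operatorname{IET}^{+}_{\mathrm{rc}}}$ in $\widehat{\operatorname{IET}^{\bowtie}}$ is $\widehat{\operatorname{IET}^{+}_{\mathrm{rc}}}$.
   Context: $X=[0,1[$. $\widehat{\operatorname{IET}^{\bowtie}}$ is the group of bijections $f:X\to X$ for which there is a finite partition of $X$ into intervals $[a,b[$ such that on each open interval $]a,b[$, $f$ has the form $x\mapsto x+c$ or $x\mapsto -x+c$; $\widehat{\operatorname{IET}^{+}}$ is the subgroup of those for which only the form $x\mapsto x+c$ occurs, and $\widehat{\operatorname{IET}^{+}_{\mathrm{rc}}}$ is the subgroup of right-continuous elements of $\widehat{\operatorname{IET}^{+}}$. *)

(* Defs.v *)
From Stdlib Require Import Reals Lra.
Open Scope R_scope.

Definition inX (x : R) : Prop := 0 <= x < 1.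

(* f restricts to a bijection X -> X (values outside X are irrelevant). *)
Definition bijX (f : R -> R) : Prop :=
  (forall x, inX x -> inX (f x)) /\
  (forall x y, inX x -> inX y -> f x = f y -> x = y) /\
  (forall y, inX y -> exists x, inX x /\ f x = y).

(* A finite partition of X into intervals [a i, a (i+1)[, i < n, given by
   0 = a 0 < a 1 < ... < a n = 1. *)
Definition partitionX (n : nat) (a : nat -> R) : Prop :=
  a 0%nat = 0 /\ a n = 1 /\ (forall i, (i < n)%nat -> a i < a (S i)).

(* Element of IET^bowtie-hat: bijection of X, piecewise x |-> x + c or
   x |-> -x + c on the open intervals of a finite partition. *)
Definition IET_bowtie (f : R -> R) : Prop :=
  bijX f /\
  exists (n : nat) (a : nat -> R), partitionX n a /\
    forall i, (i < n)%nat -> exists c : R,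
      (forall x, a i < x < a (S i) -> f x = x + c) \/
      (forall x, a i < x < a (S i) -> f x = - x + c).

Definition IET_plus (f : R -> R) : Prop :=
  bijX f /\
  exists (n : nat) (a : nat -> R), partitionX n a /\
    forall i, (i < n)%nat -> exists c : R,
      (forall x, a i < x < a (S i) -> f x = x + c).

Definition right_continuous_on_X (f : R -> R) : Prop :=
  forall x, inX x -> forall eps, 0 < eps -> exists delta, 0 < delta /\
    forall y, inX y -> x <= y < x + delta -> Rabs (f y - f x) < eps.

Definition IET_rc (f : R -> R) : Prop :=
  IET_plus f /\ right_continuous_on_X f.

Definition inverse_on_X (g ginv : R -> R) : Prop :=
  forall x, inX x -> ginv (g x) = x /\ g (ginv x) = x.

Definition normalizes (H : (R -> R) -> Prop) (g ginv : R -> R) : Prop :=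
  (forall h, H h -> H (fun x => g (h (ginv x)))) /\
  (forall h, H h -> H (fun x => ginv (h (g x)))).

(* Main.v *)
Require Import Defs.
From Stdlib Require Import Reals.
From Stdlib Require Import Lra Lia Arith.
Open Scope R_scope.

Lemma part_mono n a : partitionX n a -> forall j k, (j < k <= n)%nat -> a j < a k.
Proof.
  intros [H0 [H1 H2]] j k. induction k as [|k IH]; intros Hjk. lia.
  destruct (Nat.eq_dec j k) as [->|Hne]. apply H2; lia.
  apply Rlt_trans with (a k). apply IH; lia. apply H2; lia.
Qed.

Lemma part_bounds n a : partitionX n a -> forall j, (j <= n)%nat -> 0 <= a j <= 1.
Proof.
  intros Hp j Hj. pose proof (part_mono n a Hp) as Hm. destruct Hp as [H0 [H1 _]].
  split.
  - destruct j. lra. rewrite <- H0. left. apply Hm; lia.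
  - destruct (Nat.eq_dec j n) as [->|Hne]. lra. rewrite <- H1. left; apply Hm; lia.
Qed.

Lemma locate (a : nat -> R) n x : a 0%nat <= x < a n -> exists i, (i < n)%nat /\ a i <= x < a (S i).
Proof.
  induction n as [|n IH]; intros Hx. lra.
  destruct (Rlt_dec x (a n)) as [Hl|Hl].
  - destruct IH as [i [Hi Hi']]. lra. exists i; split; [lia|lra].
  - exists n; split; [lia|lra].
Qed.

Lemma locateX n a x : partitionX n a -> inX x -> exists i, (i<n)%nat /\ a i <= x < a (S i).
Proof. intros [H0 [H1 _]] Hx. apply locate. unfold inX in Hx. rewrite H0, H1. lra. Qed.

Lemma fin_choice (P : nat -> R -> Prop) n : (forall i, (i<n)%nat -> exists c, P i c) -> exists cf : nat -> R, forall i, (i<n)%nat -> P i (cf i).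
Proof.
  induction n as [|n IH]; intros H.
  - exists (fun _ => 0). intros; lia.
  - destruct IH as [cf Hcf]. intros i Hi; apply H; lia.
    destruct (H n) as [c Hc]. lia.
    exists (fun i => if Nat.eqb i n then c else cf i). intros i Hi.
    destruct (Nat.eqb_spec i n) as [->|Hne]. exact Hc. apply Hcf; lia.
Qed.

Definition fin (B : R -> Prop) := exists m (s : nat -> R), forall x, B x -> exists k, (k < m)%nat /\ s k = x.

Lemma fin_union B1 B2 : fin B1 -> fin B2 -> fin (fun x => B1 x \/ B2 x).
Proof.
  intros [m1 [s1 H1]] [m2 [s2 H2]].
  exists (m1 + m2)%nat, (fun k => if Nat.ltb k m1 then s1 k else s2 (k - m1)%nat).
  intros x [Hx|Hx].
  - destruct (H1 x Hx) as [k [Hk Hs]]. exists k. split. lia.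
    destruct (Nat.ltb_spec k m1). exact Hs. lia.
  - destruct (H2 x Hx) as [k [Hk Hs]]. exists (m1 + k)%nat. split. lia.
    destruct (Nat.ltb_spec (m1+k) m1). lia. replace (m1 + k - m1)%nat with k by lia. exact Hs.
Qed.

Lemma fin_fam (s : nat -> R) m : fin (fun x => exists k, (k < m)%nat /\ s k = x).
Proof. exists m, s. intros x [k Hk]. exists k; exact Hk. Qed.

Lemma refine (s : nat -> R) m : exists n a, partitionX n a /\
  forall k, (k < m)%nat -> 0 < s k < 1 -> exists j, (j <= n)%nat /\ a j = s k.
Proof.
  induction m as [|m IH].
  - exists 1%nat, (fun k => match k with O => 0 | _ => 1 end).
    split. split. reflexivity. split. reflexivity. intros i Hi. destruct i. lra. lia.
    intros; lia.
  - destruct IH as [n [a [Hp Hc]]].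
    assert (Hkeep : (exists j, (j <= n)%nat /\ a j = s m) \/ ~ (0 < s m < 1) -> exists n a, partitionX n a /\ forall k, (k < S m)%nat -> 0 < s k < 1 -> exists j, (j <= n)%nat /\ a j = s k).
    { intros Hor. exists n, a. split. exact Hp. intros k Hk Hs.
      destruct (Nat.eq_dec k m) as [->|Hne].
      - destruct Hor as [H|H]. exact H. contradiction.
      - apply Hc. lia. exact Hs. }
    destruct (Rlt_dec 0 (s m)) as [Hs0|Hs0]; [|apply Hkeep; right; lra].
    destruct (Rlt_dec (s m) 1) as [Hs1|Hs1]; [|apply Hkeep; right; lra].
    destruct (locateX n a (s m) Hp) as [i [Hi Hloc]]. unfold inX; lra.
    destruct (Req_dec (a i) (s m)) as [Heq|Hneq].
    { apply Hkeep. left. exists i. split. lia. exact Heq. }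
    destruct Hp as [H0 [H1 H2]].
    exists (S n), (fun k => if Nat.leb k i then a k else if Nat.eqb k (S i) then s m else a (k - 1)%nat).
    split. split. simpl. exact H0.
    split. destruct (Nat.leb_spec (S n) i). lia. destruct (Nat.eqb_spec (S n) (S i)). lia.
    replace (S n - 1)%nat with n by lia. exact H1.
    intros k Hk.
    destruct (lt_eq_lt_dec k i) as [[Hki|Hki]|Hki].
    + destruct (Nat.leb_spec k i); [|lia]. destruct (Nat.leb_spec (S k) i); [|lia]. apply H2; lia.
    + subst k. destruct (Nat.leb_spec i i); [|lia]. destruct (Nat.leb_spec (S i) i); [lia|].
      destruct (Nat.eqb_spec (S i) (S i)); [|lia]. lra.
    + destruct (Nat.leb_spec k i); [lia|]. destruct (Nat.leb_spec (S k) i); [lia|].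
      destruct (Nat.eqb_spec (S k) (S i)); [lia|].
      destruct (Nat.eqb_spec k (S i)) as [->|Hne].
      * replace (S (S i) - 1)%nat with (S i) by lia. lra.
      * replace (S k - 1)%nat with k by lia.
        assert (Hx : a (k-1)%nat < a (S (k-1))) by (apply H2; lia).
        replace (S (k-1)) with k in Hx by lia. exact Hx.
    + intros k Hk Hs. destruct (Nat.eq_dec k m) as [->|Hne].
      * exists (S i). split. lia. destruct (Nat.leb_spec (S i) i). lia.
        destruct (Nat.eqb_spec (S i) (S i)). reflexivity. lia.
      * destruct (Hc k ltac:(lia) Hs) as [j [Hj Haj]].
        destruct (Nat.le_gt_cases j i).
        -- exists j. split. lia. destruct (Nat.leb_spec j i); [exact Haj|lia].
        -- exists (S j). split. lia. destruct (Nat.leb_spec (S j) i); [lia|].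
           destruct (Nat.eqb_spec (S j) (S i)); [lia|]. replace (S j - 1)%nat with j by lia. exact Haj.
Qed.

Lemma part_from_breaks (f : R -> R) B : fin B ->
  (forall u v, 0 <= u -> u < v -> v <= 1 -> (forall x, B x -> ~ (u < x < v)) ->
     exists c, forall x, u < x < v -> f x = x + c) ->
  exists n a, partitionX n a /\ forall i, (i < n)%nat -> exists c, forall x, a i < x < a (S i) -> f x = x + c.
Proof.
  intros [m [s Hs]] HT.
  destruct (refine s m) as [n [a [Hp Hc]]].
  exists n, a. split. exact Hp. intros i Hi.
  pose proof (part_mono n a Hp) as Hm.
  pose proof (part_bounds n a Hp i ltac:(lia)) as Hb1.
  pose proof (part_bounds n a Hp (S i) ltac:(lia)) as Hb2.
  pose proof (Hm i (S i) ltac:(lia)).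
  apply HT. lra. lra. lra.
  intros x Hx Hin. destruct (Hs x Hx) as [k [Hk Hsk]].
  destruct (Hc k Hk) as [j [Hj Haj]]. rewrite Hsk. lra.
  rewrite Hsk in Haj. destruct (lt_eq_lt_dec j i) as [[Hji|Hji]|Hji].
  - pose proof (Hm j i ltac:(lia)). lra.
  - subst. lra.
  - destruct (Nat.eq_dec j (S i)) as [->|Hne]. lra. pose proof (Hm (S i) j ltac:(lia)). lra.
Qed.
Definition LRT (f : R -> R) := forall x, inX x -> exists d, 0 < d /\ exists c, forall y, x <= y < x + d -> f y = y + c.

Lemma LRT_rc f : LRT f -> right_continuous_on_X f.
Proof.
  intros H x Hx eps Heps. destruct (H x Hx) as [d [Hd [c Hc]]].
  exists (Rmin d eps). split. apply Rmin_pos; lra.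
  intros y Hy Hxy. pose proof (Rmin_l d eps). pose proof (Rmin_r d eps).
  rewrite (Hc y) by lra. rewrite (Hc x) by lra.
  replace (y + c - (x + c)) with (y - x) by ring. rewrite Rabs_right; lra.
Qed.

Lemma absD x : Rabs x = x \/ Rabs x = - x.
Proof. unfold Rabs; destruct (Rcase_abs x); [right|left]; reflexivity. Qed.
Lemma absB x e : Rabs x < e -> -e < x < e.
Proof. intros H; unfold Rabs in H; destruct (Rcase_abs x); lra. Qed.

Lemma rc_left_end f a b c : a < b -> 0 <= a -> b <= 1 -> right_continuous_on_X f ->
  (forall x, a < x < b -> f x = x + c) -> f a = a + c.
Proof.
  intros Hab Ha Hb Hrc Hf.
  destruct (Req_dec (f a) (a + c)) as [E|E]; [exact E|exfalso].
  set (D := Rabs (f a - (a + c))).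
  assert (HD : 0 < D) by (apply Rabs_pos_lt; intro; apply E; lra).
  assert (HDe : D = f a - (a + c) \/ D = - (f a - (a + c))) by (unfold D; apply absD).
  destruct (Hrc a ltac:(unfold inX; lra) (D/2) ltac:(lra)) as [d [Hd Hy]].
  set (e := Rmin d (Rmin (b - a) D) / 2).
  assert (He : 0 < e /\ e < d /\ e < b - a /\ e <= D/2).
  { assert (0 < Rmin d (Rmin (b-a) D)) by (repeat apply Rmin_pos; lra).
    pose proof (Rmin_l d (Rmin (b-a) D)); pose proof (Rmin_r d (Rmin (b-a) D));
    pose proof (Rmin_l (b-a) D); pose proof (Rmin_r (b-a) D). unfold e; lra. }
  specialize (Hy (a + e) ltac:(unfold inX; lra) ltac:(lra)).
  rewrite Hf in Hy by lra. apply absB in Hy. lra.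
Qed.

Lemma IET_plus_LRT f : IET_plus f -> right_continuous_on_X f -> LRT f.
Proof.
  intros [Hb [n [a [Hp Hpc]]]] Hrc x Hx.
  destruct (locateX n a x Hp Hx) as [i [Hi Hloc]].
  destruct (Hpc i Hi) as [c Hc].
  pose proof (part_mono n a Hp i (S i) ltac:(lia)).
  pose proof (part_bounds n a Hp i ltac:(lia)). pose proof (part_bounds n a Hp (S i) ltac:(lia)).
  assert (Ha : f (a i) = a i + c) by (apply (rc_left_end f (a i) (a (S i)) c); auto; lra).
  exists (a (S i) - x). split. lra. exists c. intros y Hy.
  destruct (Req_dec y (a i)) as [->|Hne]. exact Ha. apply Hc. lra.
Qed.

Lemma LRT_comp p q : LRT p -> LRT q -> (forall x, inX x -> inX (q x)) -> LRT (fun x => p (q x)).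
Proof.
  intros Hp Hq Hqx x Hx.
  destruct (Hq x Hx) as [d1 [Hd1 [c1 Hc1]]].
  destruct (Hp (q x) (Hqx x Hx)) as [d2 [Hd2 [c2 Hc2]]].
  assert (Eq : q x = x + c1) by (apply Hc1; lra).
  exists (Rmin d1 d2). split. apply Rmin_pos; lra. exists (c1 + c2). intros y Hy.
  pose proof (Rmin_l d1 d2). pose proof (Rmin_r d1 d2).
  rewrite (Hc1 y) by lra. rewrite Hc2; [ring|lra].
Qed.

Lemma LRT_inv g ginv : bijX g -> inverse_on_X g ginv -> LRT g -> LRT ginv.
Proof.
  intros [Hgx [Hgi Hgs]] Hinv Hg w Hw.
  destruct (Hgs w Hw) as [z [Hz Hzw]].
  destruct (Hg z Hz) as [d [Hd [c Hc]]].
  assert (Ew : w = z + c) by (rewrite <- Hzw; apply Hc; lra).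
  exists (Rmin d (1 - z)). split. unfold inX in Hz. apply Rmin_pos; lra.
  exists (- c). intros y Hy. pose proof (Rmin_l d (1 - z)). pose proof (Rmin_r d (1-z)).
  assert (Hgy : g (y - c) = y) by (rewrite Hc; [ring|lra]).
  replace (ginv y) with (ginv (g (y - c))) by (rewrite Hgy; reflexivity).
  rewrite (proj1 (Hinv (y - c) ltac:(unfold inX in *; lra))). ring.
Qed.

Lemma bijX_comp p q : bijX p -> bijX q -> bijX (fun x => p (q x)).
Proof.
  intros [Hp1 [Hp2 Hp3]] [Hq1 [Hq2 Hq3]]. split; [|split].
  - intros x Hx. apply Hp1, Hq1, Hx.
  - intros x y Hx Hy E. apply Hq2; auto.
  - intros y Hy. destruct (Hp3 y Hy) as [z [Hz Ez]]. destruct (Hq3 z Hz) as [x [Hx Ex]].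
    exists x. split. exact Hx. rewrite Ex. exact Ez.
Qed.

Lemma bijX_inv g ginv : bijX g -> inverse_on_X g ginv -> bijX ginv.
Proof.
  intros [H1 [H2 H3]] Hinv. split; [|split].
  - intros x Hx. destruct (H3 x Hx) as [z [Hz Ez]]. rewrite <- Ez. rewrite (proj1 (Hinv z Hz)). exact Hz.
  - intros x y Hx Hy E. rewrite <- (proj2 (Hinv x Hx)), <- (proj2 (Hinv y Hy)), E. reflexivity.
  - intros y Hy. exists (g y). split. apply H1, Hy. apply (proj1 (Hinv y Hy)).
Qed.

Lemma part_comp p q : IET_plus p -> IET_plus q ->
  exists n a, partitionX n a /\ forall i, (i < n)%nat -> exists c, forall x, a i < x < a (S i) -> p (q x) = x + c.
Proof.
  intros [Hbp [np [ap [Hpp Hpc]]]] [Hbq [nq [aq [Hpq Hqc]]]].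
  destruct (fin_choice (fun i c => forall x, ap i < x < ap (S i) -> p x = x + c) np Hpc) as [cp Hcp].
  destruct (fin_choice (fun i c => forall x, aq i < x < aq (S i) -> q x = x + c) nq Hqc) as [cq Hcq].
  cbv beta in Hcp, Hcq.
  destruct Hbq as [Hq1 [Hq2 Hq3]].
  destruct (fin_choice (fun j y => inX y /\ q y = ap j) np) as [pre Hpre].
  { intros j Hj. apply Hq3. pose proof (part_mono np ap Hpp j (S j) ltac:(lia)).
    pose proof (part_bounds np ap Hpp (S j) ltac:(lia)). pose proof (part_bounds np ap Hpp j ltac:(lia)).
    unfold inX; lra. }
  cbv beta in Hpre.
  apply part_from_breaks with (B := fun x => (exists k, (k < S nq)%nat /\ aq k = x) \/ (exists j, (j < np)%nat /\ pre j = x)).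
  { apply fin_union; apply fin_fam. }
  intros u v Hu Huv Hv Hfree.
  set (x := (u + v) / 2).
  assert (Hxuv : u < x < v) by (unfold x; lra).
  destruct (locateX nq aq x Hpq ltac:(unfold inX; lra)) as [i [Hi Hloc]].
  assert (Hu1 : aq i <= u).
  { destruct (Rle_dec (aq i) u) as [H|H]. exact H. exfalso. apply (Hfree (aq i)).
    left. exists i. split. lia. reflexivity. lra. }
  assert (Hv1 : v <= aq (S i)).
  { destruct (Rle_dec v (aq (S i))) as [H|H]. exact H. exfalso. apply (Hfree (aq (S i))).
    left. exists (S i). split. lia. reflexivity. lra. }
  assert (Hqu : forall y, u < y < v -> q y = y + cq i) by (intros y Hy; apply Hcq; [lia|lra]).
  assert (Hqx : inX (q x)) by (apply Hq1; unfold inX; lra).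
  destruct (locateX np ap (q x) Hpp Hqx) as [j [Hj Hloc2]].
  rewrite (Hqu x) in Hloc2 by lra.
  assert (Hu2 : ap j <= u + cq i).
  { destruct (Rle_dec (ap j) (u + cq i)) as [H|H]. exact H. exfalso.
    assert (Hy : u < ap j - cq i < v) by lra.
    apply (Hfree (ap j - cq i)); [|exact Hy]. right. exists j. split. exact Hj.
    destruct (Hpre j Hj) as [Hpj Eq]. apply Hq2. exact Hpj. unfold inX; lra.
    rewrite Eq. rewrite Hqu by lra. ring. }
  assert (Hv2 : v + cq i <= ap (S j)).
  { destruct (Rle_dec (v + cq i) (ap (S j))) as [H|H]. exact H. exfalso.
    assert (Hy : u < ap (S j) - cq i < v) by lra.
    assert (Hqy : q (ap (S j) - cq i) = ap (S j)) by (rewrite Hqu by lra; ring).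
    destruct (Nat.eq_dec (S j) np) as [E|E].
    - pose proof (Hq1 (ap (S j) - cq i) ltac:(unfold inX; lra)) as Hin. rewrite Hqy in Hin.
      destruct Hpp as [_ [Hn _]]. rewrite E, Hn in Hin. unfold inX in Hin; lra.
    - apply (Hfree (ap (S j) - cq i)); [|lra]. right. exists (S j). split. lia.
      destruct (Hpre (S j) ltac:(lia)) as [Hpj Eq]. apply Hq2. exact Hpj. unfold inX; lra.
      rewrite Eq, Hqy. reflexivity. }
  exists (cq i + cp j). intros y Hy. rewrite (Hqu y Hy). rewrite (Hcp j Hj) by lra. ring.
Qed.

Lemma part_inv g ginv : IET_plus g -> right_continuous_on_X g -> inverse_on_X g ginv ->
  exists n a, partitionX n a /\ forall i, (i < n)%nat -> exists c, forall x, a i < x < a (S i) -> ginv x = x + c.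
Proof.
  intros [Hb [n [a [Hp Hpc]]]] Hrc Hinv.
  destruct (fin_choice (fun i c => forall x, a i < x < a (S i) -> g x = x + c) n Hpc) as [cf Hcf].
  cbv beta in Hcf.
  assert (Hcf' : forall i, (i < n)%nat -> forall y, a i <= y < a (S i) -> g y = y + cf i).
  { intros i Hi y Hy. pose proof (part_mono n a Hp i (S i) ltac:(lia)).
    pose proof (part_bounds n a Hp i ltac:(lia)). pose proof (part_bounds n a Hp (S i) ltac:(lia)).
    destruct (Req_dec y (a i)) as [->|Hne].
    - apply (rc_left_end g (a i) (a (S i)) (cf i)); auto; lra.
    - apply Hcf; auto; lra. }
  apply part_from_breaks with (B := fun x => (exists k, (k < n)%nat /\ a k + cf k = x) \/ (exists k, (k < n)%nat /\ a (S k) + cf k = x)).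
  { apply fin_union; [apply (fin_fam (fun k => a k + cf k))| apply (fin_fam (fun k => a (S k) + cf k))]. }
  intros u v Hu Huv Hv Hfree.
  set (x := (u + v) / 2).
  assert (Hxuv : u < x < v) by (unfold x; lra).
  assert (Hx : inX x) by (unfold inX; lra).
  assert (Hz : inX (ginv x)) by (apply (bijX_inv g ginv Hb Hinv); exact Hx).
  destruct (locateX n a (ginv x) Hp Hz) as [j [Hj Hloc]].
  assert (Ex : x = ginv x + cf j) by (rewrite <- (Hcf' j Hj (ginv x) Hloc); symmetry; apply (proj2 (Hinv x Hx))).
  assert (Hu1 : a j + cf j <= u).
  { destruct (Rle_dec (a j + cf j) u) as [H|H]. exact H. exfalso.
    apply (Hfree (a j + cf j)). left. exists j. split. exact Hj. reflexivity. lra. }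
  assert (Hv1 : v <= a (S j) + cf j).
  { destruct (Rle_dec v (a (S j) + cf j)) as [H|H]. exact H. exfalso.
    apply (Hfree (a (S j) + cf j)). right. exists j. split. exact Hj. reflexivity. lra. }
  exists (- cf j). intros w Hw.
  pose proof (part_bounds n a Hp j ltac:(lia)). pose proof (part_bounds n a Hp (S j) ltac:(lia)).
  assert (Hgw : g (w - cf j) = w) by (rewrite (Hcf' j Hj) by lra; ring).
  replace (ginv w) with (ginv (g (w - cf j))) by (rewrite Hgw; reflexivity).
  rewrite (proj1 (Hinv (w - cf j) ltac:(unfold inX; lra))). ring.
Qed.

Lemma rc_comp p q : IET_rc p -> IET_rc q -> IET_rc (fun x => p (q x)).
Proof.
  intros [Hp Hpr] [Hq Hqr]. pose proof (IET_plus_LRT p Hp Hpr). pose proof (IET_plus_LRT q Hq Hqr).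
  split. split. apply bijX_comp. apply Hp. apply Hq. apply part_comp; auto.
  apply LRT_rc. apply LRT_comp; auto. apply (proj1 (proj1 Hq)).
Qed.

Lemma rc_inv g ginv : IET_rc g -> inverse_on_X g ginv -> IET_rc ginv.
Proof.
  intros [Hg Hgr] Hinv. split. split. apply (bijX_inv g ginv (proj1 Hg) Hinv). apply (part_inv g ginv Hg Hgr Hinv).
  apply LRT_rc. apply (LRT_inv g ginv (proj1 Hg) Hinv). apply IET_plus_LRT; auto.
Qed.
Lemma mk_rc f B : bijX f -> fin B -> (forall u v, 0 <= u -> u < v -> v <= 1 -> (forall x, B x -> ~ (u < x < v)) -> exists c, forall x, u < x < v -> f x = x + c) -> LRT f -> IET_rc f.
Proof. intros Hb Hf HT HL. split. split. exact Hb. apply (part_from_breaks f B Hf HT). apply LRT_rc, HL. Qed.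

Definition h3 (s r x : R) : R := if Rlt_dec x s then x + (r - s) else if Rlt_dec x r then x - s else x.

Lemma h3_rc s r : 0 < s < r -> r < 1 -> IET_rc (h3 s r).
Proof.
  intros Hs Hr.
  apply mk_rc with (B := fun x => exists k, (k < 2)%nat /\ (fun k => if Nat.eqb k 0 then s else r) k = x).
  - split; [|split].
    + intros x Hx. unfold inX in *. unfold h3. destruct (Rlt_dec x s); destruct (Rlt_dec x r); lra.
    + intros x y Hx Hy. unfold inX in *. unfold h3.
      destruct (Rlt_dec x s); destruct (Rlt_dec x r); destruct (Rlt_dec y s); destruct (Rlt_dec y r); intros; lra.
    + intros y Hy. unfold inX in *.
      destruct (Rlt_dec y (r - s)).
      * exists (y + s). unfold h3. destruct (Rlt_dec (y+s) s); destruct (Rlt_dec (y+s) r); split; lra.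
      * destruct (Rlt_dec y r).
        -- exists (y - (r - s)). unfold h3. destruct (Rlt_dec (y - (r-s)) s); destruct (Rlt_dec (y - (r - s)) r); split; lra.
        -- exists y. unfold h3. destruct (Rlt_dec y s); destruct (Rlt_dec y r); split; lra.
  - apply fin_fam.
  - intros u v Hu Huv Hv Hfree.
    destruct (Rle_dec v s).
    + exists (r - s). intros x Hx. unfold h3. destruct (Rlt_dec x s); [reflexivity|exfalso; lra].
    + assert (Hus : s <= u).
      { destruct (Rle_dec s u) as [H|H]; [exact H|]. exfalso. apply (Hfree s). exists 0%nat. split. lia. reflexivity. lra. }
      destruct (Rle_dec v r).
      * exists (- s). intros x Hx. unfold h3. destruct (Rlt_dec x s); [exfalso; lra|]. destruct (Rlt_dec x r); [ring|exfalso; lra].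
      * assert (Hur : r <= u).
        { destruct (Rle_dec r u) as [H|H]; [exact H|]. exfalso. apply (Hfree r). exists 1%nat. split. lia. reflexivity. lra. }
        exists 0. intros x Hx. unfold h3. destruct (Rlt_dec x s); [exfalso; lra|]. destruct (Rlt_dec x r); [exfalso; lra|ring].
  - intros x Hx. unfold inX in Hx. destruct (Rlt_dec x s).
    + exists (s - x). split. lra. exists (r - s). intros y Hy. unfold h3. destruct (Rlt_dec y s); [reflexivity|exfalso; lra].
    + destruct (Rlt_dec x r).
      * exists (r - x). split. lra. exists (-s). intros y Hy. unfold h3. destruct (Rlt_dec y s); [exfalso;lra|]. destruct (Rlt_dec y r); [ring|exfalso;lra].
      * exists 1. split. lra. exists 0. intros y Hy. unfold h3. destruct (Rlt_dec y s); [exfalso;lra|]. destruct (Rlt_dec y r); [exfalso;lra|ring].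
Qed.

Definition rot (t x : R) : R := if Rlt_dec x (1 - t) then x + t else x + t - 1.

Lemma rot_rc t : 0 <= t < 1 -> IET_rc (rot t).
Proof.
  intros Ht.
  apply mk_rc with (B := fun x => exists k, (k < 1)%nat /\ (fun _ : nat => 1 - t) k = x).
  - split; [|split].
    + intros x Hx. unfold inX in *. unfold rot. destruct (Rlt_dec x (1 - t)); lra.
    + intros x y Hx Hy. unfold inX in *. unfold rot.
      destruct (Rlt_dec x (1 - t)); destruct (Rlt_dec y (1 - t)); intros; lra.
    + intros y Hy. unfold inX in *.
      destruct (Rle_dec t y).
      * exists (y - t). unfold rot. destruct (Rlt_dec (y - t) (1 - t)); split; lra.
      * exists (y + 1 - t). unfold rot. destruct (Rlt_dec (y + 1 - t) (1 - t)); split; lra.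
  - apply fin_fam.
  - intros u v Hu Huv Hv Hfree.
    destruct (Rle_dec v (1 - t)).
    + exists t. intros x Hx. unfold rot. destruct (Rlt_dec x (1 - t)); [reflexivity|exfalso; lra].
    + assert (Hus : 1 - t <= u).
      { destruct (Rle_dec (1 - t) u) as [H|H]; [exact H|]. exfalso. apply (Hfree (1 - t)). exists 0%nat. split. lia. reflexivity. lra. }
      exists (t - 1). intros x Hx. unfold rot. destruct (Rlt_dec x (1 - t)); [exfalso; lra|ring].
  - intros x Hx. unfold inX in Hx. destruct (Rlt_dec x (1 - t)).
    + exists (1 - t - x). split. lra. exists t. intros y Hy. unfold rot. destruct (Rlt_dec y (1 - t)); [reflexivity|exfalso; lra].
    + exists 1. split. lra. exists (t - 1). intros y Hy. unfold rot. destruct (Rlt_dec y (1 - t)); [exfalso; lra|ring].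
Qed.
Lemma no_flip g ginv n a i c : inverse_on_X g ginv -> bijX g -> partitionX n a -> (i < n)%nat ->
  (forall h, IET_rc h -> IET_rc (fun x => g (h (ginv x)))) ->
  (forall x, a i < x < a (S i) -> g x = - x + c) -> False.
Proof.
  intros Hinv [Hg1 [Hg2 Hg3]] Hp Hi Hn Hf.
  pose proof (part_mono n a Hp i (S i) ltac:(lia)).
  pose proof (part_bounds n a Hp i ltac:(lia)). pose proof (part_bounds n a Hp (S i) ltac:(lia)).
  set (q := (a i + a (S i)) / 2). set (r := (q + a (S i)) / 2).
  assert (Hq : a i < q < r /\ r < a (S i)) by (unfold r, q; lra).
  destruct (Hn (h3 q r) (h3_rc q r ltac:(lra) ltac:(lra))) as [_ Hrc].
  assert (Hy0 : inX (g q)) by (apply Hg1; unfold inX; lra).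
  assert (Hgq : ginv (g q) = q) by (apply (proj1 (Hinv q ltac:(unfold inX; lra)))).
  assert (Hh0 : h3 q r q = 0) by (unfold h3; destruct (Rlt_dec q q); [lra|]; destruct (Rlt_dec q r); [ring|lra]).
  assert (Hg0r : g 0 <> g r).
  { intro E. assert (0 = r) by (apply Hg2; [unfold inX; lra | unfold inX; lra | exact E]). lra. }
  set (D := Rabs (g r - g 0)).
  assert (HD : 0 < D) by (apply Rabs_pos_lt; intro E; apply Hg0r; lra).
  assert (HDe : D = g r - g 0 \/ D = - (g r - g 0)) by (unfold D; apply absD).
  destruct (Hrc (g q) Hy0 (D/2) ltac:(lra)) as [d [Hd Hy]].
  set (e := Rmin d (Rmin (q - a i) D) / 2).
  assert (He : 0 < e /\ e < d /\ e < q - a i /\ e <= D/2).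
  { assert (0 < Rmin d (Rmin (q - a i) D)) by (repeat apply Rmin_pos; lra).
    pose proof (Rmin_l d (Rmin (q - a i) D)); pose proof (Rmin_r d (Rmin (q - a i) D));
    pose proof (Rmin_l (q - a i) D); pose proof (Rmin_r (q - a i) D). unfold e; lra. }
  assert (Egq : g q = - q + c) by (apply Hf; lra).
  assert (Egr : g r = - r + c) by (apply Hf; lra).
  assert (Egy : g (q - e) = g q + e) by (rewrite Hf by lra; rewrite Egq; ring).
  assert (Hyx : inX (g q + e)) by (rewrite <- Egy; apply Hg1; unfold inX; lra).
  assert (Hgi : ginv (g q + e) = q - e) by (rewrite <- Egy; apply (proj1 (Hinv (q - e) ltac:(unfold inX; lra)))).
  assert (Hh : h3 q r (q - e) = r - e) by (unfold h3; destruct (Rlt_dec (q - e) q); [ring|lra]).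
  assert (Egre : g (r - e) = g r + e) by (rewrite Hf by lra; rewrite Egr; ring).
  specialize (Hy (g q + e) Hyx ltac:(lra)).
  cbv beta in Hy. rewrite Hgi, Hh, Egre, Hgq, Hh0 in Hy.
  apply absB in Hy. lra.
Qed.

Lemma endpoint g ginv n a cf i : inverse_on_X g ginv -> bijX g -> partitionX n a -> (i < n)%nat ->
  (forall h, IET_rc h -> IET_rc (fun x => ginv (h (g x)))) ->
  (forall j, (j < n)%nat -> forall x, a j < x < a (S j) -> g x = x + cf j) ->
  g (a i) = a i + cf i.
Proof.
  intros Hinv [Hg1 [Hg2 Hg3]] Hp Hi Hn Hf.
  destruct (Req_dec (g (a i)) (a i + cf i)) as [E|E]; [exact E|exfalso].
  pose proof (part_mono n a Hp i (S i) ltac:(lia)).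
  pose proof (part_bounds n a Hp i ltac:(lia)). pose proof (part_bounds n a Hp (S i) ltac:(lia)).
  assert (Ha0 : a 0%nat = 0) by apply (proj1 Hp).
  pose proof (part_mono n a Hp 0 1 ltac:(lia)) as H01.
  pose proof (part_bounds n a Hp 1 ltac:(lia)) as Hb1.
  set (L := a i + cf i).
  assert (HL0 : 0 <= L).
  { destruct (Rle_dec 0 L) as [H'|H']; [exact H'|exfalso].
    pose proof (Rmin_l (- L) (a (S i) - a i)). pose proof (Rmin_r (- L) (a (S i) - a i)).
    assert (0 < Rmin (- L) (a (S i) - a i)) by (apply Rmin_pos; lra).
    set (y := a i + Rmin (- L) (a (S i) - a i) / 2).
    assert (Hy : inX (g y)) by (apply Hg1; unfold inX, y; lra).
    rewrite (Hf i Hi y) in Hy by (unfold y; lra). unfold inX, y, L in *. lra. }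
  assert (HL1 : L < 1).
  { set (y := (a i + a (S i)) / 2).
    assert (Hy : inX (g y)) by (apply Hg1; unfold inX, y; lra).
    rewrite (Hf i Hi y) in Hy by (unfold y; lra). unfold inX, y, L in *. lra. }
  set (z := (a 0%nat + a 1%nat) / 2).
  assert (Hz : a 0%nat < z < a 1%nat) by (unfold z; lra).
  set (w := g z).
  assert (Ew : w = z + cf 0%nat) by (apply Hf; [lia|lra]).
  assert (Hw : inX w) by (apply Hg1; unfold inX; lra).
  set (t := if Rle_dec L w then w - L else 1 + w - L).
  assert (Ht : 0 <= t < 1 /\ rot t L = w).
  { unfold t, rot. unfold inX in Hw. destruct (Rle_dec L w).
    - split. lra. destruct (Rlt_dec L (1 - (w - L))); [ring|lra].
    - split. lra. destruct (Rlt_dec L (1 - (1 + w - L))); [lra|ring]. }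
  destruct Ht as [Ht Hrot].
  pose proof (rot_rc t Ht) as Hr.
  destruct (IET_plus_LRT (rot t) (proj1 Hr) (proj2 Hr) L ltac:(unfold inX; lra)) as [d1 [Hd1 [dd Hdd]]].
  assert (Hdd0 : w = L + dd) by (rewrite <- Hrot; apply Hdd; lra).
  destruct (Hn (rot t) Hr) as [_ Hrc].
  assert (Hai : inX (a i)) by (unfold inX; lra).
  assert (Hgai : inX (g (a i))) by (apply Hg1; exact Hai).
  assert (Hrg : inX (rot t (g (a i)))) by (apply (proj1 (proj1 (proj1 Hr))); exact Hgai).
  set (V := ginv (rot t (g (a i)))).
  assert (HV : V <> z).
  { intro EV. apply E.
    assert (Heq : rot t (g (a i)) = rot t L).
    { rewrite Hrot. unfold w. rewrite <- EV. unfold V. apply eq_sym, (proj2 (Hinv _ Hrg)). }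
    apply (proj1 (proj2 (proj1 (proj1 Hr)))); [exact Hgai | unfold inX; unfold L in HL0, HL1; lra | exact Heq]. }
  set (D := Rabs (V - z)).
  assert (HD : 0 < D) by (apply Rabs_pos_lt; intro; apply HV; lra).
  assert (HDe : D = V - z \/ D = - (V - z)) by (unfold D; apply absD).
  destruct (Hrc (a i) Hai (D/2) ltac:(lra)) as [d [Hd Hy]].
  set (e := Rmin d (Rmin d1 (Rmin (a (S i) - a i) (Rmin (a 1%nat - z) D))) / 2).
  assert (He : 0 < e /\ e < d /\ e < d1 /\ e < a (S i) - a i /\ e < a 1%nat - z /\ e <= D/2).
  { assert (0 < Rmin d (Rmin d1 (Rmin (a (S i) - a i) (Rmin (a 1%nat - z) D)))) by (repeat apply Rmin_pos; lra).
    pose proof (Rmin_l d (Rmin d1 (Rmin (a (S i) - a i) (Rmin (a 1%nat - z) D)))).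
    pose proof (Rmin_r d (Rmin d1 (Rmin (a (S i) - a i) (Rmin (a 1%nat - z) D)))).
    pose proof (Rmin_l d1 (Rmin (a (S i) - a i) (Rmin (a 1%nat - z) D))).
    pose proof (Rmin_r d1 (Rmin (a (S i) - a i) (Rmin (a 1%nat - z) D))).
    pose proof (Rmin_l (a (S i) - a i) (Rmin (a 1%nat - z) D)).
    pose proof (Rmin_r (a (S i) - a i) (Rmin (a 1%nat - z) D)).
    pose proof (Rmin_l (a 1%nat - z) D). pose proof (Rmin_r (a 1%nat - z) D).
    unfold e; lra. }
  assert (E1 : g (a i + e) = L + e) by (rewrite (Hf i Hi) by lra; unfold L; ring).
  assert (E2 : rot t (L + e) = w + e) by (rewrite Hdd by lra; lra).
  assert (E3 : g (z + e) = w + e) by (rewrite (Hf 0%nat ltac:(lia)) by lra; lra).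
  assert (E4 : ginv (w + e) = z + e) by (rewrite <- E3; apply (proj1 (Hinv (z + e) ltac:(unfold inX; lra)))).
  specialize (Hy (a i + e) ltac:(unfold inX; lra) ltac:(lra)).
  cbv beta in Hy. rewrite E1, E2, E4 in Hy.
  change (ginv (rot t (g (a i)))) with V in Hy.
  apply absB in Hy. lra.
Qed.

Theorem proposition5p3 :
  forall (g ginv : R -> R), inverse_on_X g ginv ->
    ((IET_bowtie g /\ normalizes IET_rc g ginv) <-> IET_rc g).
Proof.
  intros g ginv Hinv. split.
  - intros [[Hb [n [a [Hp Hpc]]]] [Hn1 Hn2]].
    assert (Htr : forall i, (i < n)%nat -> exists c, forall x, a i < x < a (S i) -> g x = x + c).
    { intros i Hi. destruct (Hpc i Hi) as [c [Hc|Hc]]. exists c; exact Hc.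
      exfalso. exact (no_flip g ginv n a i c Hinv Hb Hp Hi Hn1 Hc). }
    destruct (fin_choice (fun i c => forall x, a i < x < a (S i) -> g x = x + c) n Htr) as [cf Hcf].
    cbv beta in Hcf.
    assert (Hend : forall i, (i < n)%nat -> g (a i) = a i + cf i)
      by (intros i Hi; exact (endpoint g ginv n a cf i Hinv Hb Hp Hi Hn2 Hcf)).
    split. split. exact Hb. exists n, a. split. exact Hp. exact Htr.
    apply LRT_rc. intros x Hx. destruct (locateX n a x Hp Hx) as [i [Hi Hloc]].
    exists (a (S i) - x). split. lra. exists (cf i). intros y Hy.
    destruct (Req_dec y (a i)) as [->|Hne]. apply Hend; exact Hi. apply Hcf; [exact Hi|lra].
  - intros Hg. split.
    + destruct Hg as [[Hb [n [a [Hp Hpc]]]] _]. split. exact Hb. exists n, a. split. exact Hp.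
      intros i Hi. destruct (Hpc i Hi) as [c Hc]. exists c. left. exact Hc.
    + pose proof (rc_inv g ginv Hg Hinv) as Hgi. split; intros h Hh.
      * exact (rc_comp g (fun x => h (ginv x)) Hg (rc_comp h ginv Hh Hgi)).
      * exact (rc_comp ginv (fun x => h (g x)) Hgi (rc_comp h g Hh Hg)).
Qed.
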